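(* If $H$ is a corona graph, then its 2-subdivision graph $S_2(H)$ (for any function $\alpha$) is a minimal DPDP-graph. In particular, $S_2(F\circ K_1)$ is a minimal DPDP-graph for every graph $F$.
   Context: Graphs are finite and may have multiple edges and loops. A leaf is a vertex of degree one. The corona $F\circ K_1$ of a graph $F$ is obtained from $F$ by adding a pendant edge (to a new leaf) at each vertex of $F$. A corona graph is a graph obtained from a graph $F$ by attaching at least one pendant edge to each vertex of $F$. A set $D\subseteq V(G)$ is dominating if every vertex outside $D$ has a neighbor in $D$; $P$ is paired-dominating if it is dominating and the subgraph induced by $P$ has a perfect matching. A DPDP-graph is a graph $G$ admitting disjoint sets $D,P$ with $V(G)=D\cup P$, $D$ dominating and $P$ paired-dominating; a minimal DPDP-graph is a DPDP-graph no proper spanning subgraph of which is a DPDP-graph. 2-subdivision graph: for a graph $H$ with no isolated vertex, set of leaves $L_H$, and $\alpha:L_H\to\mathbb{N}=\{1,2,\dots\}$, $S_2(H)$ has vertex set $(V_H\setminus L_H)\cup\{(v,i): v\in L_H, 1\le i\le \alpha(v)\}$ together with two new vertices for each edge $e$ of $H$ ($u_e,v_e$ if $e$ joins $u\ne v$; $v_e^1,v_e^2$ if $e$ is a loop at $v$). Its edges are: the edge joining the two new vertices of each $e$; for $v\in V_H\setminus L_H$, $vv_e$ for each non-loop edge $e$ at $v$ and $vv_e^1,vv_e^2$ for each loop $e$ at $v$; for $v\in L_H$ with incident edge $e$, the edges $v_e(v,i)$, $1\le i\le\alpha(v)$. *)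

(* Defs.v *)
From mathcomp Require Import all_boot.
Set Implicit Arguments. Unset Strict Implicit. Unset Printing Implicit Defensive.

(* A finite multigraph is given by a finite vertex type V, a finite edge type E
   and the (ordered) pair of end vertices of each edge; an edge [e] with
   [ends e = (v, v)] is a loop at [v].  Spanning subgraphs of such a graph are
   given by subsets [F : {set E}] of its edges (all vertices kept). *)

Section Graphs.
Variables (V E : finType) (ends : E -> V * V).

Definition incident (e : E) (v : V) : bool := ((ends e).1 == v) || ((ends e).2 == v).

(* degree: a loop contributes 2 *)
Definition deg (v : V) : nat :=
  #|[set e | (ends e).1 == v]| + #|[set e | (ends e).2 == v]|.

Definition is_leaf (v : V) : bool := deg v == 1.

Definition adjF (F : {set E}) (u v : V) : bool :=
  (u != v) && [exists e in F, (ends e == (u, v)) || (ends e == (v, u))].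

Definition dominatingF (F : {set E}) (D : {set V}) : Prop :=
  forall v, v \notin D -> exists2 u, u \in D & adjF F v u.

Definition has_perfect_matchingF (F : {set E}) (P : {set V}) : Prop :=
  exists M : {set E},
    [/\ M \subset F,
        (forall e, e \in M -> [/\ (ends e).1 \in P, (ends e).2 \in P & (ends e).1 != (ends e).2])
      & (forall v, v \in P -> #|[set e in M | incident e v]| = 1)].

Definition paired_dominatingF (F : {set E}) (P : {set V}) : Prop :=
  dominatingF F P /\ has_perfect_matchingF F P.

Definition DPDPF (F : {set E}) : Prop :=
  exists D P : {set V},
    [/\ [disjoint D & P], D :|: P = setT, dominatingF F D & paired_dominatingF F P].

Definition is_DPDP : Prop := DPDPF setT.

Definition minimal_DPDP : Prop :=
  is_DPDP /\ forall F : {set E}, F \proper setT -> ~ DPDPF F.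

(* H is a corona graph: there is a set C (= V(F)) such that every vertex outside
   C is a leaf whose edge joins it to a vertex of C (a pendant edge attached to
   C), and every vertex of C carries at least one such pendant edge. *)
Definition is_corona : Prop :=
  exists C : {set V},
    (forall v, v \notin C ->
       is_leaf v /\ forall e, incident e v -> ((ends e).1 \in C) || ((ends e).2 \in C))
    /\ (forall c, c \in C -> exists e v, v \notin C /\ (ends e = (c, v) \/ ends e = (v, c))).

End Graphs.

(* The corona F o K_1: a new leaf [inr v] attached to each vertex [inl v]. *)
Section Corona.
Variables (V E : finType) (ends : E -> V * V).
Definition coronaV : finType := (V + V)%type.
Definition coronaE : finType := (E + V)%type.
Definition corona_ends (x : coronaE) : coronaV * coronaV :=
  match x with
  | inl e => (inl (ends e).1, inl (ends e).2)
  | inr v => (inl v, inr v)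
  end.
End Corona.

(* The 2-subdivision graph S_2(H) with multiplicity function alpha
   (only its values on leaves matter; copies (v,i), 1 <= i <= alpha v, are
   indexed by i : 'I_(alpha v), i.e. 0 <= i < alpha v). *)
Section S2.
Variables (V E : finType) (ends : E -> V * V) (alpha : V -> nat).

(* the edge-vertex (e, false) is u_e and (e, true) is v_e, where ends e = (u, v);
   for a loop these are v_e^1, v_e^2 *)
Definition endpt (eb : E * bool) : V := if eb.2 then (ends eb.1).2 else (ends eb.1).1.

Definition S2inner : finType := {v : V | ~~ is_leaf ends v}.
Definition S2copies : finType := {p : {v : V & 'I_(alpha v)} | is_leaf ends (tag p)}.
Definition S2V : finType := (S2inner + S2copies + (E * bool))%type.
Definition S2E : finType :=
  (E + {eb : E * bool | ~~ is_leaf ends (endpt eb)}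
     + {q : (E * bool) * S2copies | tag (val q.2) == endpt q.1})%type.

Definition S2ends (x : S2E) : S2V * S2V :=
  match x with
  | inl (inl e) => (inr (e, false), inr (e, true))
  | inl (inr eb) => (inl (inl (exist _ (endpt (val eb)) (valP eb))), inr (val eb))
  | inr q => (inr (val q).1, inl (inr (val q).2))
  end.
End S2.
Arguments S2ends {V E} ends alpha x.

(* Main.v *)
Require Import Defs.
From mathcomp Require Import all_boot.
Set Implicit Arguments. Unset Strict Implicit. Unset Printing Implicit Defensive.

Section Leaf.
Variables (V E : finType) (ends : E -> V * V).

Lemma leaf_ex v : is_leaf ends v -> exists eb : E * bool, endpt ends eb = v.
Proof.
rewrite /is_leaf /deg.
case: (set_0Vmem [set e | (ends e).1 == v]) => [->|[e]].
  rewrite cards0 add0n => /cards1P [e He].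
  have : e \in [set e | (ends e).2 == v] by rewrite He set11.
  rewrite inE => /eqP He2. by exists (e, true).
rewrite inE => /eqP He1 _. by exists (e, false).
Qed.

Lemma leaf_uniq v eb1 eb2 : is_leaf ends v -> endpt ends eb1 = v -> endpt ends eb2 = v -> eb1 = eb2.
Proof.
rewrite /is_leaf /deg => /eqP Hd.
case: eb1 => e1 b1; case: eb2 => e2 b2; rewrite /endpt /=.
have Hle1 : #|[set e | (ends e).1 == v]| <= 1 by rewrite -Hd leq_addr.
have Hle2 : #|[set e | (ends e).2 == v]| <= 1 by rewrite -Hd leq_addl.
case: b1; case: b2 => H1 H2.
- by congr pair; move/card_le1_eqP: Hle2 => Hu; apply: Hu; rewrite inE; apply/eqP.
- have h1 : 0 < #|[set e | (ends e).1 == v]| by apply/card_gt0P; first [by exists e1; rewrite inE; apply/eqP | by exists e2; rewrite inE; apply/eqP].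
  have h2 : 0 < #|[set e | (ends e).2 == v]| by apply/card_gt0P; first [by exists e1; rewrite inE; apply/eqP | by exists e2; rewrite inE; apply/eqP].
  by move: Hd; rewrite -(prednK h1) -(prednK h2) addSn addnS.
- have h1 : 0 < #|[set e | (ends e).1 == v]| by apply/card_gt0P; first [by exists e1; rewrite inE; apply/eqP | by exists e2; rewrite inE; apply/eqP].
  have h2 : 0 < #|[set e | (ends e).2 == v]| by apply/card_gt0P; first [by exists e1; rewrite inE; apply/eqP | by exists e2; rewrite inE; apply/eqP].
  by move: Hd; rewrite -(prednK h1) -(prednK h2) addSn addnS.
- by congr pair; move/card_le1_eqP: Hle1 => Hu; apply: Hu; rewrite inE; apply/eqP.
Qed.
End Leaf.

Lemma eq_inr (A B : eqType) (x y : B) : (@inr A B x == inr y) = (x == y).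
Proof. by apply/eqP/eqP => [[]|->]. Qed.
Lemma eq_inl (A B : eqType) (x y : A) : (@inl A B x == inl y) = (x == y).
Proof. by apply/eqP/eqP => [[]|->]. Qed.

Section Main.
Variables (V E : finType) (ends : E -> V * V) (alpha : V -> nat).
Hypothesis Hcor : is_corona ends.
Hypothesis Halpha : forall v, is_leaf ends v -> 0 < alpha v.

Local Notation G := (S2ends ends alpha).
Local Notation SV := (S2V ends alpha).
Local Notation SE := (S2E ends alpha).

Definition mkcopy v (hv : is_leaf ends v) : S2copies ends alpha :=
  exist _ (existT (fun v => 'I_(alpha v)) v (Ordinal (Halpha hv))) hv.

Lemma adjE F (a b : SV) : adjF G F a b -> exists2 z, z \in F & (G z = (a,b) \/ G z = (b,a)).
Proof.
case/andP => _ /existsP [z /andP [zF /orP [/eqP h|/eqP h]]]; exists z => //; by [left|right].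
Qed.

Lemma NbCopy F c y : adjF G F (inl (inr c)) y ->
  exists q : {q : (E * bool) * S2copies ends alpha | tag (val q.2) == endpt ends q.1},
    [/\ inr q \in F, (val q).2 = c & y = inr (val q).1].
Proof.
case/adjE => -[[e|eb]|q] zF /= [] // [] <- h.
by exists q; split.
Qed.

Lemma NbEdge F eb y : adjF G F (inr eb) y ->
  [\/ inl (inl eb.1) \in F /\ y = inr (eb.1, ~~ eb.2),
      exists eb' : {eb : E * bool | ~~ is_leaf ends (endpt ends eb)},
        [/\ inl (inr eb') \in F, val eb' = eb & y = inl (inl (exist _ (endpt ends (val eb')) (valP eb')))]
    | exists q : {q : (E * bool) * S2copies ends alpha | tag (val q.2) == endpt ends q.1},
        [/\ inr q \in F, (val q).1 = eb & y = inl (inr (val q).2)]].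
Proof.
case/adjE => -[[e|eb']|q] zF /= [] [].
- move=> <- <-; by constructor 1.
- move=> <- <-; by constructor 1.
- by [].
- move=> <- <-; constructor 2; by exists eb'.
- move=> <- <-; constructor 3; by exists q.
- by [].
Qed.

Lemma pendant w : ~~ is_leaf ends w -> exists e b, [/\ is_leaf ends (endpt ends (e, ~~ b)), endpt ends (e, b) = w
   & endpt ends (e, ~~ b) != w].
Proof.
move=> hw; case: Hcor => C [H1 H2].
have wC : w \in C by apply/negPn/negP => /H1 [hl _]; rewrite hl in hw.
case: (H2 w wC) => e [v [vC h]].
have vw : v != w by apply/eqP => vw; move: vC; rewrite vw wC.
have lv := (H1 v vC).1.
case: h => h; [exists e, false | exists e, true]; by rewrite /endpt h.
Qed.

Section Fixed.
Variables (F : {set SE}) (D P : {set SV}).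
Hypotheses (dis : [disjoint D & P]) (cov : D :|: P = setT)
  (domD : dominatingF G F D) (pdP : paired_dominatingF G F P).

Lemma DorP x : (x \in D) || (x \in P).
Proof. by rewrite -in_setU cov inE. Qed.

Lemma notDP x : x \in D -> x \in P -> False.
Proof. by move=> h; rewrite (disjointFr dis h). Qed.

Lemma Zlem x : exists2 y, y \in P & adjF G F x y.
Proof.
case: pdP => domP [M [MF Mends Mcard]].
case/orP: (DorP x) => xin.
  by apply: domP; rewrite (disjointFr dis xin).
have : 0 < #|[set e in M | incident G e x]| by rewrite Mcard.
case/card_gt0P => m; rewrite inE => /andP [mM /orP [/eqP h|/eqP h]];
  case: (Mends m mM) => h1 h2 hneq.
- exists (G m).2 => //; rewrite /adjF -h hneq /=; apply/existsP; exists m.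
  by rewrite (subsetP MF _ mM) /= -surjective_pairing eqxx.
- exists (G m).1 => //; rewrite /adjF -h eq_sym hneq /=; apply/existsP; exists m.
  by rewrite (subsetP MF _ mM) /= -surjective_pairing eqxx orbT.
Qed.

Lemma Dlem x : x \in P -> exists2 y, y \in D & adjF G F x y.
Proof. move=> xP; apply: domD; apply/negP => xD; exact: notDP xD xP. Qed.

Lemma copyD c : (inl (inr c) : SV) \in D.
Proof.
case/orP: (DorP (inl (inr c))) => // cP.
case: (Zlem (inl (inr c))) => y1 y1P /NbCopy [q1 [_ q1c y1e]].
case: (Dlem cP) => y2 y2D /NbCopy [q2 [_ q2c y2e]].
have hl := valP c.
have e1 : endpt ends (val q1).1 = tag (val c) by rewrite -q1c; apply/esym/eqP; exact: (valP q1).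
have e2 : endpt ends (val q2).1 = tag (val c) by rewrite -q2c; apply/esym/eqP; exact: (valP q2).
have := leaf_uniq hl e1 e2 => eq12.
by exfalso; apply: (notDP y2D); rewrite y2e -eq12 -y1e.
Qed.

Lemma innerD w (hw : ~~ is_leaf ends w) : (inl (inl (exist _ w hw)) : SV) \in D.
Proof.
case: (pendant hw) => e [b [hl ew vw]].
set v := endpt ends (e, ~~ b) in hl vw.
pose c0 := mkcopy hl.
case: (Zlem (inl (inr c0))) => y1 y1P /NbCopy [q1 [_ q1c y1e]].
have e1 : endpt ends (val q1).1 = v by have := valP q1; rewrite q1c => /eqP <-.
have := leaf_uniq hl e1 (erefl _) => q1e.
rewrite y1e q1e in y1P.
case: (Zlem (inr (e, ~~ b))) => y2 y2P /NbEdge [[_ y2e]|[eb' [_ eb'e _]]|[q [_ _ y2e]]].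
- rewrite /= negbK in y2e; rewrite y2e in y2P.
  case: (Dlem y2P) => y3 y3D /NbEdge [[_ y3e]|[eb' [_ eb'e y3e]]|[q [_ qe y3e]]].
  + by rewrite /= in y3e; rewrite y3e in y3D; case: (notDP y3D y1P).
  + move: y3D; rewrite y3e.
    have -> : (exist _ (endpt ends (val eb')) (valP eb') : S2inner ends) = exist _ w hw.
      by apply: val_inj; rewrite /= eb'e.
    by [].
  + have := valP q; rewrite qe ew => /eqP tq.
    by have := valP (val q).2; rewrite tq (negbTE hw).
- by have := valP eb'; rewrite eb'e hl.
- by rewrite y2e in y2P; case: (notDP (copyD _) y2P).
Qed.

Lemma NbP eb y : y \in P -> adjF G F (inr eb) y -> inl (inl eb.1) \in F /\ y = inr (eb.1, ~~ eb.2).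
Proof.
move=> yP /NbEdge [//|[eb' [_ _ ye]]|[q [_ _ ye]]]; rewrite ye in yP.
- by case: (notDP (innerD _) yP).
- by case: (notDP (copyD _) yP).
Qed.
End Fixed.

Lemma noDPDP (F : {set SE}) x : x \notin F -> ~ DPDPF G F.
Proof.
move=> xF [D [P [dis cov domD pdP]]].
case: x xF => [[e|eb0]|q] xF.
- case: (Zlem dis cov pdP (inr (e, false))) => y yP /(NbP dis cov domD pdP yP) [h _].
  by rewrite h in xF.
- set eb := val eb0.
  case: (Zlem dis cov pdP (inr eb)) => y1 y1P /(NbP dis cov domD pdP y1P) [_ y1e].
  rewrite y1e in y1P.
  case: (Zlem dis cov pdP (inr (eb.1, ~~ eb.2))) => y2 y2P /(NbP dis cov domD pdP y2P) [_ y2e].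
  rewrite y2e /= negbK -surjective_pairing in y2P.
  case: (Dlem dis domD y2P) => y3 y3D /NbEdge [[_ y3e]|[eb' [h eb'e _]]|[q [_ qe _]]].
  + by rewrite y3e in y3D; case: (notDP dis y3D y1P).
  + have eq : eb' = eb0 by apply: val_inj.
    by rewrite eq in h; rewrite h in xF.
  + have := valP q; rewrite qe => /eqP tq.
    by have := valP (val q).2; rewrite tq (negbTE (valP eb0)).
- case: (Zlem dis cov pdP (inl (inr (val q).2))) => y yP /NbCopy [q' [q'F q'e _]].
  have hl := valP (val q).2.
  have e1 : endpt ends (val q').1 = tag (val (val q).2) by have := valP q'; rewrite q'e => /eqP <-.
  have e2 : endpt ends (val q).1 = tag (val (val q).2) by have := valP q => /eqP <-.
  have eq1 := leaf_uniq hl e1 e2.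
  have eq : q' = q by apply: val_inj; rewrite [val q']surjective_pairing [val q]surjective_pairing eq1 q'e.
  by rewrite eq in q'F; rewrite q'F in xF.
Qed.

Definition is_ev (x : SV) : bool := if x is inr _ then true else false.
Definition is_ee (z : SE) : bool := if z is inl (inl _) then true else false.

Lemma isDPDP : is_DPDP G.
Proof.
exists [set x | ~~ is_ev x], [set x | is_ev x]; split.
- by rewrite -setI_eq0; apply/eqP/setP => x; rewrite !inE; case: (is_ev x).
- by apply/setP => x; rewrite !inE; case: (is_ev x).
- move=> v; rewrite inE negbK; case: v => // -[e b] _.
  case hl: (is_leaf ends (endpt ends (e, b))).
  + exists (inl (inr (mkcopy hl))); first by rewrite inE.
    rewrite /adjF /=; apply/existsP.
    exists (inr (exist (fun q : (E * bool) * S2copies ends alpha => tag (val q.2) == endpt ends q.1)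
                  ((e, b), mkcopy hl) (eqxx _))).
    by rewrite in_setT eqxx.
  + have hn : ~~ is_leaf ends (endpt ends (e, b)) by rewrite hl.
    exists (inl (inl (exist _ (endpt ends (e, b)) hn))); first by rewrite inE.
    rewrite /adjF /=; apply/existsP.
    exists (inl (inr (exist (fun eb => ~~ is_leaf ends (endpt ends eb)) (e, b) hn))).
    by rewrite in_setT /=; apply/eqP; congr (inl (inl _), _); apply: val_inj.
- split.
  + case=> [[i|c]|eb]; rewrite inE //= => _.
    * case: (pendant (valP i)) => e [b [_ ew _]].
      have pf : ~~ is_leaf ends (endpt ends (e, b)) by rewrite ew; exact: (valP i).
      exists (inr (e, b)); first by rewrite inE.
      have -> : i = exist _ (endpt ends (e, b)) pf by apply: val_inj.
      rewrite /adjF /=; apply/existsP.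
      exists (inl (inr (exist (fun eb => ~~ is_leaf ends (endpt ends eb)) (e, b) pf))).
      by rewrite in_setT /=; apply/orP; left; apply/eqP; congr (inl (inl _), _); apply: val_inj.
    * case: (leaf_ex (valP c)) => eb ebe.
      have pf : tag (val c) == endpt ends eb by rewrite ebe.
      exists (inr eb); first by rewrite inE.
      rewrite /adjF /=; apply/existsP.
      exists (inr (exist (fun q : (E * bool) * S2copies ends alpha => tag (val q.2) == endpt ends q.1)
                  (eb, c) pf)).
      by rewrite in_setT eqxx orbT.
  + exists [set z | is_ee z]; split.
    * exact: subsetT.
    * case=> [[e|eb]|q]; rewrite inE //= => _; split; rewrite ?inE //; by apply/eqP => -[].
    * case=> [[i|c]|[e b]]; rewrite inE //= => _.
      rewrite (_ : [set _ in _ | _] = [set inl (inl e)]) ?cards1 //.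
      apply/setP => z; rewrite !inE.
      case: z => [[e'|eb']|q]; rewrite /incident /= ?andbF //.
      by rewrite !eq_inr !eq_inl !xpair_eqE; case: b; case: (e' == e).
Qed.

Lemma minS2 : minimal_DPDP G.
Proof.
split; first exact: isDPDP.
move=> F /properP [_ [x _ xF]]; exact: noDPDP xF.
Qed.
End Main.

Lemma corona_is_corona (V E : finType) (ends : E -> V * V) : is_corona (corona_ends ends).
Proof.
exists [set x : coronaV V | if x is inl _ then true else false]; split.
- case=> [y|y]; rewrite inE // => _; split.
  + rewrite /is_leaf /deg.
    rewrite (_ : [set e | _ == inr y] = set0); last by apply/setP; case=> [e|y']; rewrite !inE.
    rewrite (_ : [set e | (corona_ends ends e).2 == inr y] = [set inr y]) ?cards0 ?cards1 //.
    by apply/setP; case=> [e|y']; rewrite !inE.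
  + by case=> [e|y'] _; rewrite /= inE.
- case=> [y|y]; rewrite inE // => _.
  by exists (inr y), (inr y); split; [rewrite inE | left].
Qed.

Theorem corollary6p3 :
  (forall (V E : finType) (ends : E -> V * V) (alpha : V -> nat),
      is_corona ends ->
      (forall v, is_leaf ends v -> 0 < alpha v) ->
      minimal_DPDP (S2ends ends alpha))
  /\
  (forall (V E : finType) (ends : E -> V * V) (alpha : coronaV V -> nat),
      (forall v, is_leaf (corona_ends ends) v -> 0 < alpha v) ->
      minimal_DPDP (S2ends (corona_ends ends) alpha)).
Proof.
split.
- by move=> V E ends alpha Hc Ha; apply: minS2.
- move=> V E ends alpha Ha; apply: minS2 => //; exact: corona_is_corona.
Qed.
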